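(* Consider Algorithm FoBa-obj with parameter $\delta$. Let $s$ be a positive integer such that $$(s-\bar k)>(\bar k+1)\left[\left(\sqrt{\frac{\rho_+(s)}{\rho_-(s)}}+1\right)\frac{2\rho_+(1)}{\rho_-(s)}\right]^2,$$ and take $\delta>\frac{4\rho_+(1)}{\rho_-(s)^2}\|\nabla Q(\bar\beta)\|_\infty^2$. Then the algorithm terminates at some $k\le s-\bar k$.
   Context: Let $Q:\mathbb{R}^d\to\mathbb{R}$ be convex and continuously differentiable. $e_j$ is the $j$-th standard basis vector, $\mathrm{supp}(\beta)=\{j:\beta_j\ne0\}$, $\|\beta\|_0=|\mathrm{supp}(\beta)|$, $\|\cdot\|$ is the Euclidean norm, $A-B$ is set difference, and $v_S$ is $v$ restricted to the coordinates in $S$. For $F\subseteq\{1,\dots,d\}$, $\hat\beta(F)$ denotes a minimizer of $Q$ over $\{\beta:\mathrm{supp}(\beta)\subseteq F\}$ (assumed to exist). For a positive integer $s$, the restricted strong convexity constants $\rho_-(s),\rho_+(s)>0$ are constants such that for all $\beta,\beta'\in\mathbb{R}^d$ with $\|\beta'-\beta\|_0\le s$: $\frac{\rho_-(s)}{2}\|\beta'-\beta\|^2\le Q(\beta')-Q(\beta)-\langle\nabla Q(\beta),\beta'-\beta\rangle\le\frac{\rho_+(s)}{2}\|\beta'-\beta\|^2.$ $\bar\beta$ is a solution of $\min_\beta Q(\beta)$ subject to $\|\beta\|_0\le\bar k$, $\bar F=\mathrm{supp}(\bar\beta)$ and $\bar k=|\bar F|$. Algorithm FoBa has two variants: FoBa-obj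 (parameter $\delta>0$) and FoBa-gdt (parameter $\epsilon>0$). Initialize $F^{(0)}=\emptyset$, $\beta^{(0)}=0$, $k=0$, and repeat the following iteration. (1) Stopping test: FoBa-obj stops if $Q(\beta^{(k)})-\min_{\alpha\in\mathbb{R},\,j\notin F^{(k)}}Q(\beta^{(k)}+\alpha e_j)<\delta$; FoBa-gdt stops if $\|\nabla Q(\beta^{(k)})\|_\infty<\epsilon$. On stopping the output is $\beta^{(k)}$ with support $F^{(k)}$, and the algorithm is said to terminate at $k$. (2) Forward step: FoBa-obj picks $i^{(k)}\in\arg\min_{i\notin F^{(k)}}\min_\alpha Q(\beta^{(k)}+\alpha e_i)$; FoBa-gdt picks $i^{(k)}\in\arg\max_{i\notin F^{(k)}}|\nabla Q(\beta^{(k)})_i|$. Set $F^{(k+1)}=F^{(k)}\cup\{i^{(k)}\}$, $\beta^{(k+1)}=\hat\beta(F^{(k+1)})$, $\delta^{(k+1)}=Q(\beta^{(k)})-Q(\beta^{(k+1)})$, $k\leftarrow k+1$. (3) Backward step: repeat — if $F^{(k)}=\emptyset$ or $\min_{i\in F^{(k)}}Q(\beta^{(k)}-\beta^{(k)}_ie_i)-Q(\beta^{(k)})\ge\delta^{(k)}/2$, leave the backward step; otherwise pick $j\in\arg\min_{i\in F^{(k)}}Q(\beta^{(k)}-\beta^{(k)}_ie_i)$, set $F^{(k-1)}=F^{(k)}-\{j\}$, $\beta^{(k-1)}=\hat\beta(F^{(k-1)})$, $k\leftarrow k-1$ (where $\delta^{(k-1)}$ is the value recorded at the most recent forward step producing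 index $k-1$). Thus $|F^{(k)}|=k$ always. ''At the beginning of an iteration'' means the state just before a stopping test. *)

(* Defs.v *)
From Stdlib Require Import Reals.
From mathcomp Require Import all_boot.

Set Implicit Arguments.
Unset Strict Implicit.
Unset Printing Implicit Defensive.

Local Open Scope R_scope.

Definition vec (d : nat) := 'I_d -> R.

Definition vadd d (x y : vec d) : vec d := fun i => x i + y i.
Definition vsub d (x y : vec d) : vec d := fun i => x i - y i.
Definition vscale d (a : R) (x : vec d) : vec d := fun i => a * x i.
Definition vzero d : vec d := fun _ => 0.

Definition ej d (j : 'I_d) : vec d := fun i => if i == j then 1 else 0.

Definition inner d (x y : vec d) : R := \big[Rplus/0]_(i < d) (x i * y i).
Definition sqnorm d (x : vec d) : R := inner x x.
Definition norm d (x : vec d) : R := sqrt (sqnorm x).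
Definition infnorm d (x : vec d) : R := \big[Rmax/0]_(i < d) Rabs (x i).

Definition nzb (x : R) : bool := if Req_EM_T x 0 then false else true.
Definition supp d (x : vec d) : {set 'I_d} := [set i | nzb (x i)].
Definition l0 d (x : vec d) : nat := #|supp x|.

Definition convex d (Q : vec d -> R) : Prop :=
  forall (x y : vec d) (t : R), 0 <= t <= 1 ->
    Q (vadd (vscale t x) (vscale (1 - t) y)) <= t * Q x + (1 - t) * Q y.

(* grad is the gradient of Q: every directional derivative at x in direction v
   exists and equals <grad x, v>, and grad is continuous; in finite dimension
   this is exactly continuous differentiability with gradient grad. *)
Definition is_C1_with_grad d (Q : vec d -> R) (grad : vec d -> vec d) : Prop :=
  (forall (x v : vec d),
      derivable_pt_lim (fun t => Q (vadd x (vscale t v))) 0 (inner (grad x) v)) /\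
  (forall (x : vec d) (eps : R), 0 < eps -> exists eta, 0 < eta /\
      forall y : vec d, norm (vsub y x) < eta -> norm (vsub (grad y) (grad x)) < eps).

Definition RSC d (Q : vec d -> R) (grad : vec d -> vec d) (s : nat) (rm rp : R) : Prop :=
  0 < rm /\ 0 < rp /\
  forall (b b' : vec d), (l0 (vsub b' b) <= s)%N ->
    rm / 2 * sqnorm (vsub b' b) <= Q b' - Q b - inner (grad b) (vsub b' b) /\
    Q b' - Q b - inner (grad b) (vsub b' b) <= rp / 2 * sqnorm (vsub b' b).

Definition is_hat d (Q : vec d -> R) (F : {set 'I_d}) (b : vec d) : Prop :=
  (forall j, j \notin F -> b j = 0) /\
  forall b' : vec d, (forall j, j \notin F -> b' j = 0) -> Q b <= Q b'.

(* State of FoBa at the beginning of an iteration: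
   F = F^(k), beta = beta^(k), ds = [:: delta^(k); delta^(k-1); ...; delta^(1)]
   (the values recorded at the most recent forward step producing each index). *)
Record state (d : nat) := mkState {
  stF : {set 'I_d};
  stbeta : vec d;
  stds : seq R
}.

Definition init_state d : state d := mkState set0 (@vzero d) [::].

Definition plus_coord d (b : vec d) (a : R) (j : 'I_d) : vec d :=
  vadd b (vscale a (ej j)).

(* The min is realised by an explicit minimiser (j0, a0); if every coordinate is
   already in F the min over the empty set is +infinity and the test holds. *)
Definition stop_obj d (Q : vec d -> R) (delta : R) (st : state d) : Prop :=
  let F := stF st in let b := stbeta st in
  (forall j : 'I_d, j \in F) \/
  exists (j0 : 'I_d) (a0 : R),
    j0 \notin F /\
    (forall (j : 'I_d) (a : R), j \notin F -> Q (plus_coord b a0 j0) <= Q (plus_coord b a j)) /\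
    Q b - Q (plus_coord b a0 j0) < delta.

Definition fwd_obj d (Q : vec d -> R) (st st' : state d) : Prop :=
  let F := stF st in let b := stbeta st in
  exists (i : 'I_d) (ai : R),
    i \notin F /\
    (forall (j : 'I_d) (a : R), j \notin F -> Q (plus_coord b ai i) <= Q (plus_coord b a j)) /\
    stF st' = i |: F /\
    is_hat Q (stF st') (stbeta st') /\
    stds st' = (Q b - Q (stbeta st')) :: stds st.

Definition Qdrop d (Q : vec d -> R) (b : vec d) (i : 'I_d) : R :=
  Q (plus_coord b (- b i) i).

Inductive bwd d (Q : vec d -> R) : state d -> state d -> Prop :=
| bwd_leave : forall st : state d,
    (stF st = set0 \/
     forall i, i \in stF st -> Qdrop Q (stbeta st) i - Q (stbeta st) >= head 0 (stds st) / 2) ->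
    bwd Q st st
| bwd_remove : forall (st st' st'' : state d) (j : 'I_d),
    stF st != set0 ->
    (exists i, i \in stF st /\ Qdrop Q (stbeta st) i - Q (stbeta st) < head 0 (stds st) / 2) ->
    j \in stF st ->
    (forall i, i \in stF st -> Qdrop Q (stbeta st) j <= Qdrop Q (stbeta st) i) ->
    stF st' = stF st :\ j ->
    is_hat Q (stF st') (stbeta st') ->
    stds st' = behead (stds st) ->
    bwd Q st' st'' ->
    bwd Q st st''.

Definition iter_obj d (Q : vec d -> R) (st st'' : state d) : Prop :=
  exists st', fwd_obj Q st st' /\ bwd Q st' st''.

Definition foba_obj_run d (Q : vec d -> R) (delta : R) (tr : nat -> state d) : Prop :=
  tr 0%N = init_state d /\
  forall t : nat, ~ stop_obj Q delta (tr t) -> iter_obj Q (tr t) (tr t.+1).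

(* Main.v *)
Require Import Defs.
From HB Require Import structures.
From Stdlib Require Import Reals Lra Psatz FunctionalExtensionality Classical.
From mathcomp Require Import all_boot zify.
Set Implicit Arguments.
Unset Strict Implicit.
Local Open Scope R_scope.

Lemma Rplus_assoc' : associative Rplus. Proof. move=> x y z; ring. Qed.
Lemma Rplus_comm' : commutative Rplus. Proof. move=> x y; ring. Qed.
Lemma Rplus_0_l' : left_id 0 Rplus. Proof. move=> x; ring. Qed.
HB.instance Definition _ := Monoid.isComLaw.Build R 0 Rplus Rplus_assoc' Rplus_comm' Rplus_0_l'.

Lemma sum_le d (f g : 'I_d -> R) : (forall i, f i <= g i) ->
  \big[Rplus/0]_(i < d) f i <= \big[Rplus/0]_(i < d) g i.
Proof. move=> H; apply: (big_ind2 (fun x y => x <= y)) => //; [lra| move=> *; lra]. Qed.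

Lemma sum_add d (f g : 'I_d -> R) :
  \big[Rplus/0]_(i < d) (f i + g i) = \big[Rplus/0]_(i < d) f i + \big[Rplus/0]_(i < d) g i.
Proof. by rewrite big_split. Qed.

Lemma sum_scale d c (f : 'I_d -> R) :
  \big[Rplus/0]_(i < d) (c * f i) = c * \big[Rplus/0]_(i < d) f i.
Proof. elim/big_rec2: _ => [|i x y _ ->]; ring. Qed.

Lemma sum_ind d (A : {set 'I_d}) c :
  \big[Rplus/0]_(i < d) (if i \in A then c else 0) = INR #|A| * c.
Proof. rewrite -big_mkcond big_const /=. elim: #|A| => [|n IH] /=; first by ring.
rewrite IH; case: n {IH} => [|n] /=; ring. Qed.

Lemma nzb0 : nzb 0 = false.
Proof. rewrite /nzb; case: Req_EM_T => //. Qed.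

Lemma nzbF x : nzb x = false -> x = 0.
Proof. rewrite /nzb; case: Req_EM_T => //. Qed.

Lemma supp_out d (x : vec d) i : i \notin supp x -> x i = 0.
Proof. rewrite inE => /negbTE; exact: nzbF. Qed.

Lemma l0_le d (x : vec d) (A : {set 'I_d}) :
  (forall i, i \notin A -> x i = 0) -> (l0 x <= #|A|)%N.
Proof.
move=> H; apply: subset_leq_card; apply/subsetP => i; rewrite inE => nz.
apply/negPn/negP => /H hx; by rewrite hx nzb0 in nz.
Qed.

Lemma inner_coord d (g b : vec d) a i :
  inner g (vsub (plus_coord b a i) b) = a * g i.
Proof.
rewrite /inner (bigD1 i) //= big1 => [|j /negbTE hj];
rewrite /vsub /plus_coord /vadd /vscale /ej ?eqxx ?hj /=; ring.
Qed.

Lemma sqnorm_coord d (b : vec d) a i :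
  sqnorm (vsub (plus_coord b a i) b) = a * a.
Proof.
rewrite /sqnorm /inner (bigD1 i) //= big1 => [|j /negbTE hj];
rewrite /vsub /plus_coord /vadd /vscale /ej ?eqxx ?hj /=; ring.
Qed.

Lemma l0_coord d (b : vec d) a i : (l0 (vsub (plus_coord b a i) b) <= 1)%N.
Proof.
rewrite -(cards1 i); apply: l0_le => j; rewrite inE => /negbTE hj.
rewrite /vsub /plus_coord /vadd /vscale /ej hj; ring.
Qed.

Lemma RSC1_up d (Q : vec d -> R) grad rm rp b a i :
  RSC Q grad 1 rm rp ->
  Q (plus_coord b a i) - Q b - a * grad b i <= rp / 2 * (a * a).
Proof.
move=> [_ [_ H]]; have [_ h] := H b (plus_coord b a i) (l0_coord b a i).
by rewrite inner_coord sqnorm_coord in h.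
Qed.

Lemma arith_gz q0 q1 t g rp : 0 < rp -> q1 - q0 - t * g <= rp / 2 * (t * t) ->
  q0 <= q1 -> rp * t = - g -> g = 0.
Proof.
move=> rp0 h1 h2 ht.
have h3 : 0 <= rp * (t * g + rp / 2 * (t * t)) by apply: Rmult_le_pos; nra.
have e : rp * (t * g + rp / 2 * (t * t)) = (rp * t) * g + (rp*t)*(rp*t)/2 by field.
rewrite e ht in h3; nra.
Qed.

Lemma arith_gb q0 q1 t g rp G : 0 < rp -> q1 - q0 - t * g <= rp / 2 * (t * t) ->
  q0 - q1 <= G -> rp * t = - g -> g * g <= 2 * rp * G.
Proof.
move=> rp0 h1 h2 ht.
have h3 : rp * (q1 - q0) <= rp * (t * g + rp / 2 * (t * t)).
  apply: Rmult_le_compat_l; lra.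
have e : rp * (t * g + rp / 2 * (t * t)) = (rp * t) * g + (rp*t)*(rp*t)/2 by field.
rewrite e ht in h3.
have h4 : rp * (q0 - q1) <= rp * G by apply: Rmult_le_compat_l; lra.
nra.
Qed.

Lemma grad_zero d (Q : vec d -> R) grad rm rp b i :
  RSC Q grad 1 rm rp -> (forall t, Q b <= Q (plus_coord b t i)) -> grad b i = 0.
Proof.
move=> HR Hm; have rp0 : 0 < rp by case: HR => _ [].
have ht : rp * (- grad b i / rp) = - grad b i by field; apply: Rgt_not_eq.
exact: (arith_gz rp0 (RSC1_up b (- grad b i / rp) i HR) (Hm _) ht).
Qed.

Lemma gain_bound d (Q : vec d -> R) grad rm rp b i G :
  RSC Q grad 1 rm rp -> (forall t, Q b - Q (plus_coord b t i) <= G) ->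
  grad b i * grad b i <= 2 * rp * G.
Proof.
move=> HR Hm; have rp0 : 0 < rp by case: HR => _ [].
have ht : rp * (- grad b i / rp) = - grad b i by field; apply: Rgt_not_eq.
exact: (arith_gb rp0 (RSC1_up b (- grad b i / rp) i HR) (Hm _) ht).
Qed.

Lemma drop_bound d (Q : vec d -> R) grad rm rp b i :
  RSC Q grad 1 rm rp -> grad b i = 0 -> Qdrop Q b i - Q b <= rp / 2 * (b i * b i).
Proof.
move=> HR hg; have := RSC1_up b (- b i) i HR; rewrite /Qdrop hg; nra.
Qed.

Lemma hat_out d (Q : vec d -> R) (F : {set 'I_d}) b j : is_hat Q F b -> j \notin F -> b j = 0.
Proof. by case=> H _; apply: H. Qed.

Lemma pc_supp d (b : vec d) (F : {set 'I_d}) t (i j : 'I_d) :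
  (forall j, j \notin F -> b j = 0) -> j \notin i |: F -> plus_coord b t i j = 0.
Proof.
move=> Hb; rewrite in_setU1 negb_or => /andP [ji jF].
rewrite /plus_coord /vadd /vscale /ej (negbTE ji) Hb //; ring.
Qed.

Lemma pc_supp_in d (b : vec d) (F : {set 'I_d}) t (i j : 'I_d) :
  (forall j, j \notin F -> b j = 0) -> i \in F -> j \notin F -> plus_coord b t i j = 0.
Proof.
move=> Hb iF jF; apply: (pc_supp (F := F)) => //.
rewrite in_setU1 negb_or jF andbT; apply/eqP => e; by rewrite e iF in jF.
Qed.

Lemma hat_grad d (Q : vec d -> R) grad rm rp (F : {set 'I_d}) b i :
  RSC Q grad 1 rm rp -> is_hat Q F b -> i \in F -> grad b i = 0.
Proof.
move=> HR [Hs Hm] iF; apply: (grad_zero HR) => t; apply: Hm => j jF.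
exact: (pc_supp_in _ Hs iF jF).
Qed.

Lemma bar_grad d (Q : vec d -> R) grad rm rp bb i :
  RSC Q grad 1 rm rp -> (forall b : vec d, (l0 b <= l0 bb)%N -> Q bb <= Q b) ->
  i \in supp bb -> grad bb i = 0.
Proof.
move=> HR Hbar iF; apply: (grad_zero HR) => t; apply: Hbar.
rewrite {2}/l0; apply: l0_le => j jF; apply: (pc_supp_in (F := supp bb)) => // k; exact: supp_out.
Qed.

Lemma drop_supp d (b : vec d) (F : {set 'I_d}) (i j : 'I_d) :
  (forall j, j \notin F -> b j = 0) -> j \notin F :\ i -> plus_coord b (- b i) i j = 0.
Proof.
move=> Hb; rewrite in_setD1 negb_and negbK => /orP [/eqP -> | jF].
  rewrite /plus_coord /vadd /vscale /ej eqxx; ring.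
case: (eqVneq j i) => [->|ji]; rewrite /plus_coord /vadd /vscale /ej.
  rewrite eqxx; ring.
rewrite (negbTE ji) Hb //; ring.
Qed.

Lemma infnorm_ge d (x : vec d) i : Rabs (x i) <= infnorm x.
Proof.
rewrite /infnorm -big_filter.
have : i \in [seq j <- index_enum 'I_d | true] by rewrite filter_predT mem_index_enum.
elim: [seq j <- index_enum 'I_d | true] => //= j r IH.
rewrite in_cons big_cons => /orP [/eqP <-| /IH h]; [apply: Rmax_l | ].
apply: Rle_trans h (Rmax_r _ _).
Qed.

Lemma sum_opp d (f : 'I_d -> R) :
  \big[Rplus/0]_(i < d) (- f i) = - \big[Rplus/0]_(i < d) f i.
Proof. elim/big_rec2: _ => [|i x y _ ->]; ring. Qed.

Lemma sum_sub d (f g : 'I_d -> R) :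
  \big[Rplus/0]_(i < d) (f i - g i) = \big[Rplus/0]_(i < d) f i - \big[Rplus/0]_(i < d) g i.
Proof. rewrite /Rminus sum_add sum_opp //. Qed.

Lemma sum_ge0 d (f : 'I_d -> R) : (forall i, 0 <= f i) -> 0 <= \big[Rplus/0]_(i < d) f i.
Proof. move=> H; apply: (big_ind (fun x => 0 <= x)) => //; [lra| move=> *; lra]. Qed.

Lemma arith_cross g y r p dl : 0 < r -> 0 < p -> 4 * (g * g) * p < r * r * dl ->
  dl <= p * (y * y) -> g * y <= r / 2 * (y * y) /\ - (g * y) <= r / 2 * (y * y).
Proof.
move=> r0 p0 h1 h2.
have h3 : 4 * (g * g) < r * r * (y * y).
  have : p * (4 * (g * g)) < p * (r * r * (y * y)) by nra.
  move=> h; apply: (Rmult_lt_reg_l p) => //.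
have h4 : Rabs (2 * g) <= Rabs (r * y).
  apply: Rsqr_le_abs_0; rewrite /Rsqr; nra.
rewrite !Rabs_mult (Rabs_right 2) ?(Rabs_right r) in h4; try lra.
have h5 : Rabs (g * y) <= r / 2 * (y * y).
  rewrite Rabs_mult; have hy := Rabs_pos y.
  have -> : y * y = Rabs y * Rabs y by rewrite -Rabs_mult Rabs_right //; nra.
  nra.
split; [apply: Rle_trans (Rle_abs _) h5 | apply: Rle_trans (Rle_abs _) _; rewrite Rabs_Ropp //].
Qed.

Lemma arith_final a m kb fp s rms rps rp1 sx : 0 < rms -> rms <= rps -> rms <= rp1 ->
  0 <= a -> 0 <= m <= kb -> sx * sx = rps / rms -> 0 <= sx ->
  a * (rms * rms * rms) <= 2 * m * (rp1 * rp1) * (rps - rms) -> fp <= kb + a ->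
  s - kb > (kb + 1) * ((sx + 1) * (2 * rp1 / rms)) ^ 2 -> fp + kb < s.
Proof.
move=> r0 h1 h2 ha hm hsx sx0 hA hf hs.
set r := rp1 / rms; set x := rps / rms.
have er : rp1 = r * rms by rewrite /r; field; lra.
have ex : rps = x * rms by rewrite /x; field; lra.
have r1 : 1 <= r by rewrite /r; apply: (Rmult_le_reg_r rms) => //; rewrite -er; lra.
have x1 : 1 <= x by rewrite /x; apply: (Rmult_le_reg_r rms) => //; rewrite -ex; lra.
rewrite -/x in hsx.
have ha2 : a <= 2 * m * (r * r) * (x - 1).
  rewrite er ex in hA.
  apply: (Rmult_le_reg_r (rms * rms * rms)); first by repeat apply: Rmult_lt_0_compat.
  have -> : 2 * m * (r * r) * (x - 1) * (rms * rms * rms) = 2 * m * (r * rms * (r * rms)) * (x * rms - rms) by ring.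
  lra.
have ha3 : a <= 2 * kb * (r * r) * (x - 1).
  apply: Rle_trans ha2 _; have : 0 <= (r * r) * (x - 1) by nra. nra.
have hc : ((sx + 1) * (2 * rp1 / rms)) ^ 2 >= 4 * (r * r) * (x + 1).
  have -> : ((sx + 1) * (2 * rp1 / rms)) ^ 2 = 4 * (r * r) * (sx * sx + 2 * sx + 1).
    rewrite /r; field; lra.
  rewrite hsx; nra.
have hc2 : 4 * (r * r) * (x + 1) >= 1 + 2 * (r * r) * (x - 1) by nra.
have hkb : 0 <= kb by lra.
nra.
Qed.

Lemma arith_comb a m S dl rms rps rp1 : 0 < rms -> 0 < rp1 -> rms <= rps -> 0 < dl ->
  rms * rms / 2 * S <= m * (rp1 * dl) -> a * (rms / 2 * dl) <= rp1 * (rps - rms) / 2 * S ->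
  a * (rms * rms * rms) <= 2 * m * (rp1 * rp1) * (rps - rms).
Proof.
move=> r0 p0 h0 d0 hA hB.
have h1 : a * (rms / 2 * dl) * (rms * rms) <= rp1 * (rps - rms) / 2 * S * (rms * rms).
  apply: Rmult_le_compat_r => //; nra.
have hc : 0 <= rp1 * (rps - rms) by nra.
have h2 : rp1 * (rps - rms) * (rms * rms / 2 * S) <= rp1 * (rps - rms) * (m * (rp1 * dl)).
  exact: Rmult_le_compat_l.
have h3 : (a * (rms * rms * rms)) * dl <= (2 * m * (rp1 * rp1) * (rps - rms)) * dl.
  have e1 : a * (rms * rms * rms) * dl = 2 * (a * (rms / 2 * dl) * (rms * rms)) by field.
  have e2 : 2 * m * (rp1 * rp1) * (rps - rms) * dl = 2 * (rp1 * (rps - rms) * (m * (rp1 * dl))) by ring.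
  have e3 : rp1 * (rps - rms) / 2 * S * (rms * rms) = rp1 * (rps - rms) * (rms * rms / 2 * S) by field.
  rewrite e1 e2; rewrite e3 in h1; lra.
exact: (Rmult_le_reg_r dl).
Qed.

Lemma card_supp_le d (F : {set 'I_d}) : F != set0 -> (0 < #|F|)%N.
Proof. by rewrite card_gt0. Qed.

Lemma head_ge d (F : {set 'I_d}) ds delta j :
  size ds = #|F| -> List.Forall (fun x => delta <= x) ds -> j \in F -> delta <= head 0 ds.
Proof.
case: ds => [|x ds] /=.
  move=> h _ jF; have : (0 < #|F|)%N by apply/card_gt0P; exists j.
  by rewrite -h.
by move=> _ H _; inversion H.
Qed.

Lemma key d (Q : vec d -> R) grad bb
  (Hbar : forall b : vec d, (l0 b <= l0 bb)%N -> Q bb <= Q b)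
  s (Hs : (0 < s)%N) rms rps rm1 rp1
  (HRs : RSC Q grad s rms rps) (HR1 : RSC Q grad 1 rm1 rp1)
  (Hsk : INR s - INR (l0 bb) >
         (INR (l0 bb) + 1) * ((sqrt (rps / rms) + 1) * (2 * rp1 / rms)) ^ 2)
  delta (Hdelta0 : delta > 0)
  (Hdelta : delta > 4 * rp1 / rms ^ 2 * (infnorm (grad bb)) ^ 2)
  (st st' : state d) :
  is_hat Q (stF st) (stbeta st) -> size (stds st) = #|stF st| ->
  List.Forall (fun x => delta <= x) (stds st) ->
  (forall i, i \in stF st -> Qdrop Q (stbeta st) i - Q (stbeta st) >= head 0 (stds st) / 2) ->
  (#|stF st| + l0 bb < s)%N -> ~ stop_obj Q delta st -> fwd_obj Q st st' ->
  (forall i, i \in stF st' -> Qdrop Q (stbeta st') i - Q (stbeta st') >= head 0 (stds st') / 2) ->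
  (#|stF st'| + l0 bb < s)%N.
Proof.
move=> Hhat Hsize Hds Hlv Hcard Hns [i [ai [hiF [hmin [hF' [hhat' hds']]]]]] Hlv'.
have hgain0 : delta <= Q (stbeta st) - Q (plus_coord (stbeta st) ai i).
  apply: Rnot_lt_le => h; apply: Hns; right; exists i, ai; split => //.
rewrite hds' /= in Hlv'; rewrite hF' in Hlv' hhat' *.
move: (stbeta st') hhat' Hlv' => b' hhat' Hlv'.
move: (stF st) (stbeta st) (stds st) Hhat Hsize Hds Hlv Hcard hiF hmin hgain0 Hlv' hhat'.
move=> F b ds Hhat Hsize Hds Hlv Hcard hiF hmin hgain0 Hlv' hhat'.
clear hF' hds' Hns st st'.
have [rms0 [rps0 HRsb]] := HRs.
have [rm10 [rp10 HR1b]] := HR1.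
set Fb := supp bb.
set kb := l0 bb.
have kbE : kb = #|Fb| by [].
set F' := i |: F.
have cF' : #|F'| = (#|F| + 1)%N by rewrite cardsU1 hiF addnC.
have bout : forall j, j \notin F -> b j = 0 by case: Hhat.
have b'out : forall j, j \notin F' -> b' j = 0 by case: hhat'.
have bbout : forall j, j \notin Fb -> bb j = 0 by move=> j; apply: supp_out.
have hpc : Q b' <= Q (plus_coord b ai i).
  case: hhat' => _ H; apply: H => j hj; exact: (pc_supp _ bout hj).
set dl := Q b - Q b'.
have hdl : delta <= dl by rewrite /dl; lra.
have hgj : forall j, j \notin F -> grad b j * grad b j <= 2 * rp1 * dl.
  move=> j jF; apply: (gain_bound HR1) => t.
  have := hmin j t jF; rewrite /dl; lra.
have gF : forall j, j \in F -> grad b j = 0 by move=> j; apply: (hat_grad HR1 Hhat).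
have gF' : forall j, j \in F' -> grad b' j = 0 by move=> j; apply: (hat_grad HR1 hhat').
have gFb : forall j, j \in Fb -> grad bb j = 0 by move=> j; apply: (bar_grad HR1 Hbar).
have bF : forall j, j \in F -> delta <= rp1 * (b j * b j).
  move=> j jF; have h1 := Hlv j jF; have h2 := head_ge Hsize Hds jF.
  have h3 := drop_bound HR1 (gF j jF); lra.
have b'F : forall j, j \in F' -> dl <= rp1 * (b' j * b' j).
  move=> j jF; have h1 := Hlv' j jF.
  have h3 := drop_bound HR1 (gF' j jF); rewrite /dl; lra.
have ggb : forall j, 4 * (grad bb j * grad bb j) * rp1 < rms * rms * delta.
  move=> j; have h1 := infnorm_ge (grad bb) j; have h0 := Rabs_pos (grad bb j).
  have h2 : grad bb j * grad bb j <= infnorm (grad bb) ^ 2.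
    have -> : grad bb j * grad bb j = Rabs (grad bb j) * Rabs (grad bb j).
      by rewrite -Rabs_mult Rabs_right //; nra.
    simpl; nra.
  have h3 : 4 * rp1 / rms ^ 2 * infnorm (grad bb) ^ 2 * (rms * rms) = 4 * rp1 * infnorm (grad bb) ^ 2.
    field; lra.
  have h4 : 4 * rp1 * infnorm (grad bb) ^ 2 < delta * (rms * rms).
    rewrite -h3; apply: Rmult_lt_compat_r => //; nra.
  nra.
have cross : forall j y, delta <= rp1 * (y * y) ->
    grad bb j * y <= rms / 2 * (y * y) /\ - (grad bb j * y) <= rms / 2 * (y * y).
  move=> j y hy; exact: (arith_cross rms0 rp10 (ggb j) hy).
have [hrr1 hrr2] : rms <= rps /\ rms <= rp1.
  have hl1 : (l0 (vsub (plus_coord b 1 i) b) <= s)%N by apply: leq_trans (l0_coord b 1 i) Hs.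
  have [h1 h2] := HRsb b _ hl1; have [_ h3] := HR1b b _ (l0_coord b 1 i).
  rewrite sqnorm_coord in h1 h2 h3; split; lra.
have lA : (l0 (vsub bb b) <= s)%N.
  apply: (@leq_trans #|F :|: Fb|).
    apply: l0_le => j; rewrite in_setU negb_or => /andP [jF jFb].
    rewrite /vsub bout // bbout //; ring.
  apply: leq_trans (leq_card_setU F Fb).1 _; rewrite -kbE; exact: ltnW.
have lA' : (l0 (vsub b bb) <= s)%N.
  apply: (@leq_trans #|F :|: Fb|).
    apply: l0_le => j; rewrite in_setU negb_or => /andP [jF jFb].
    rewrite /vsub bout // bbout //; ring.
  apply: leq_trans (leq_card_setU F Fb).1 _; rewrite -kbE; exact: ltnW.
have [rA _] := HRsb b bb lA.
have [rB _] := HRsb bb b lA'.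
have hA : \big[Rplus/0]_(j < d) (rms / 2 * (vsub bb b j * vsub bb b j) + rms / 2 * (vsub b bb j * vsub b bb j)
      + grad b j * vsub bb b j + grad bb j * vsub b bb j) <= 0.
  rewrite !sum_add !sum_scale; rewrite /sqnorm /inner in rA rB; lra.
set D := Fb :\: F.
set A' := fun j => if j \in D then bb j * bb j else 0.
have pA : forall j, rms * rms / 2 * A' j - (if j \in D then rp1 * dl else 0) <=
    rms * (rms / 2 * (vsub bb b j * vsub bb b j) + rms / 2 * (vsub b bb j * vsub b bb j)
      + grad b j * vsub bb b j + grad bb j * vsub b bb j).
  move=> j; rewrite /A' /vsub inE.
  have hs1 := Rle_0_sqr (bb j - b j); have hs2 := Rle_0_sqr (b j - bb j); rewrite /Rsqr in hs1 hs2.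
  have hs3 : 0 <= rms * (rms / 2 * ((bb j - b j) * (bb j - b j)) + rms / 2 * ((b j - bb j) * (b j - bb j))).
    apply: Rmult_le_pos; nra.
  case: (boolP (j \in F)) => jF; case: (boolP (j \in Fb)) => jFb /=.
  - rewrite gF // gFb //; nra.
  - rewrite gF // bbout //; have [_ h] := cross j (b j) (bF j jF); nra.
  - rewrite bout // gFb //; have h := hgj j jF.
    have hq := Rle_0_sqr (rms * bb j + grad b j); rewrite /Rsqr in hq; nra.
  - rewrite bout // bbout //; nra.
have sA : rms * rms / 2 * \big[Rplus/0]_(j < d) A' j <= INR #|D| * (rp1 * dl).
  have h := sum_le pA; rewrite sum_sub sum_scale sum_ind sum_scale in h.
  have : rms * \big[Rplus/0]_(j < d) (rms / 2 * (vsub bb b j * vsub bb b j) + rms / 2 * (vsub b bb j * vsub b bb j)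
      + grad b j * vsub bb b j + grad bb j * vsub b bb j) <= 0.
    have : 0 <= rms by lra. nra.
  lra.
have cFs : (#|F'| <= s)%N by rewrite cF'; move: Hcard; lia.
have hFF' : forall j, j \notin F' -> j \notin F.
  by move=> j; rewrite in_setU1 negb_or => /andP [].
pose y : vec d := fun j => if j \in F' then bb j else 0.
have lB1 : (l0 (vsub y b') <= s)%N.
  apply: leq_trans _ cFs; apply: l0_le => j jF.
  rewrite /vsub /y (negbTE jF) b'out //; ring.
have lB2 : (l0 (vsub y bb) <= s)%N.
  apply: (@leq_trans kb); last by apply: ltnW; apply: leq_ltn_trans Hcard; apply: leq_addl.
  rewrite kbE; apply: l0_le => j jF.
  rewrite /vsub /y bbout //; case: ifP => _; ring.
have lB3 : (l0 (vsub b' bb) <= s)%N.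
  apply: (@leq_trans #|F' :|: Fb|).
    apply: l0_le => j; rewrite in_setU negb_or => /andP [jF jFb].
    rewrite /vsub b'out // bbout //; ring.
  apply: leq_trans (leq_card_setU F' Fb).1 _; rewrite -kbE cF' addnAC addn1; exact: Hcard.
have [rB1 _] := HRsb b' y lB1.
have [_ rB2] := HRsb bb y lB2.
have [rB3 _] := HRsb bb b' lB3.
have hB : \big[Rplus/0]_(j < d) (rms / 2 * (vsub y b' j * vsub y b' j) + rms / 2 * (vsub b' bb j * vsub b' bb j)
      + (- (rps / 2)) * (vsub y bb j * vsub y bb j) + grad b' j * vsub y b' j
      + (-1) * (grad bb j * vsub y bb j) + grad bb j * vsub b' bb j) <= 0.
  rewrite !sum_add !sum_scale; rewrite /sqnorm /inner in rB1 rB2 rB3; lra.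
have pB : forall j, (if j \in F' :\: Fb then rms / 2 * dl else 0) - rp1 * (rps - rms) / 2 * A' j <=
    rp1 * (rms / 2 * (vsub y b' j * vsub y b' j) + rms / 2 * (vsub b' bb j * vsub b' bb j)
      + (- (rps / 2)) * (vsub y bb j * vsub y bb j) + grad b' j * vsub y b' j
      + (-1) * (grad bb j * vsub y bb j) + grad bb j * vsub b' bb j).
  move=> j; have hA0 : 0 <= A' j by rewrite /A'; case: ifP => _; nra.
  have hc : 0 <= rp1 * (rps - rms) / 2 * A' j.
    apply: Rmult_le_pos => //; apply: Rmult_le_pos; nra.
  rewrite /vsub /y inE.
  case: (boolP (j \in F')) => jF; case: (boolP (j \in Fb)) => jFb /=.
  - rewrite gF' // gFb //.
    have hs1 := Rle_0_sqr (bb j - b' j); have hs2 := Rle_0_sqr (b' j - bb j); rewrite /Rsqr in hs1 hs2.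
    have : 0 <= rp1 * (rms / 2 * ((bb j - b' j) * (bb j - b' j)) + rms / 2 * ((b' j - bb j) * (b' j - bb j))).
      apply: Rmult_le_pos; nra.
    lra.
  - have eA : A' j = 0 by rewrite /A' inE (negbTE jFb) andbF.
    rewrite eA gF' // bbout //.
    have hb := b'F j jF; have [_ h] := cross j (b' j) (Rle_trans _ _ _ hdl hb).
    have h2 : rp1 * (rms / 2 * (b' j * b' j)) <= rp1 * (rms * (b' j * b' j) + grad bb j * b' j).
      apply: Rmult_le_compat_l; lra.
    have e : rp1 * (rms / 2 * ((0 - b' j) * (0 - b' j)) + rms / 2 * ((b' j - 0) * (b' j - 0)) +
      - (rps / 2) * ((0 - 0) * (0 - 0)) + 0 * (0 - b' j) + -1 * (grad bb j * (0 - 0)) +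
      grad bb j * (b' j - 0)) = rp1 * (rms * (b' j * b' j) + grad bb j * b' j) by field.
    rewrite e; nra.
  - have eA : A' j = bb j * bb j by rewrite /A' inE jFb (hFF' j jF).
    rewrite eA gFb // b'out //.
    have e : rp1 * (rms / 2 * ((0 - 0) * (0 - 0)) + rms / 2 * ((0 - bb j) * (0 - bb j)) +
      - (rps / 2) * ((0 - bb j) * (0 - bb j)) + grad b' j * (0 - 0) + -1 * (0 * (0 - bb j)) +
      0 * (0 - bb j)) = - (rp1 * (rps - rms) / 2 * (bb j * bb j)) by field.
    rewrite e; lra.
  - have eA : A' j = 0 by rewrite /A' inE (negbTE jFb) andbF.
    rewrite eA b'out // bbout //.
    have e : rp1 * (rms / 2 * ((0 - 0) * (0 - 0)) + rms / 2 * ((0 - 0) * (0 - 0)) +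
      - (rps / 2) * ((0 - 0) * (0 - 0)) + grad b' j * (0 - 0) + -1 * (grad bb j * (0 - 0)) +
      grad bb j * (0 - 0)) = 0 by field.
    rewrite e; lra.
have sB : INR #|F' :\: Fb| * (rms / 2 * dl) <= rp1 * (rps - rms) / 2 * \big[Rplus/0]_(j < d) A' j.
  have h := sum_le pB; rewrite sum_sub sum_scale sum_ind sum_scale in h.
  have hB' := Rmult_le_compat_l rp1 _ _ (Rlt_le _ _ rp10) hB.
  rewrite Rmult_0_r in hB'; apply: Rminus_le; exact: (Rle_trans _ _ _ h hB').
have hfin := arith_comb rms0 rp10 hrr1 (Rlt_le_trans _ _ _ Hdelta0 hdl) sA sB.
have hsq : sqrt (rps / rms) * sqrt (rps / rms) = rps / rms.
  apply: sqrt_sqrt; apply: Rlt_le; apply: Rdiv_lt_0_compat => //.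
have hsq0 := sqrt_pos (rps / rms).
have hm : 0 <= INR #|D| <= INR kb.
  split; first exact: pos_INR.
  apply: le_INR; apply/leP; rewrite kbE; apply: subset_leq_card; exact: subsetDl.
have hfp : INR #|F'| <= INR kb + INR #|F' :\: Fb|.
  rewrite -plus_INR; apply: le_INR; apply/leP.
  rewrite -(cardsID Fb F') leq_add2r kbE; apply: subset_leq_card; exact: subsetIr.
have := arith_final rms0 hrr1 hrr2 (pos_INR _) hm hsq hsq0 hfin hfp Hsk.
rewrite -plus_INR => /INR_lt /ltP //.
Qed.

Definition sumR (l : seq R) : R := foldr Rplus 0 l.
Definition Phi d (Q : vec d -> R) (st : state d) : R := Q (stbeta st) + sumR (stds st) / 2.

Lemma sumR_ge0 delta (l : seq R) : 0 < delta -> List.Forall (fun x => delta <= x) l -> 0 <= sumR l.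
Proof. move=> d0; elim: l => [|x l IH] /= H; first lra. inversion H; subst; have := IH H3; lra. Qed.

Lemma bwd_lemma d (Q : vec d -> R) delta (st1 st2 : state d) :
  bwd Q st1 st2 -> is_hat Q (stF st1) (stbeta st1) -> size (stds st1) = #|stF st1| ->
  List.Forall (fun x => delta <= x) (stds st1) ->
  is_hat Q (stF st2) (stbeta st2) /\ size (stds st2) = #|stF st2| /\
      List.Forall (fun x => delta <= x) (stds st2) /\
      (stF st2 = set0 \/ forall i, i \in stF st2 -> Qdrop Q (stbeta st2) i - Q (stbeta st2) >= head 0 (stds st2) / 2) /\
      (st2 = st1 \/ (#|stF st2| < #|stF st1|)%N) /\ Phi Q st2 <= Phi Q st1.
Proof.
elim => [st Hl | st st' st'' j Hne [i [iF hi]] jF hjmin hF' hhat' hds' _ IH] Hh Hs Hf.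
  do 4 (split => //); split; [by left | lra].
have hcard : #|stF st| = (#|stF st'|).+1 by rewrite hF' (cardsD1 j (stF st)) jF.
move: Hs Hf; case E: (stds st) => [|h t] /=.
  by move=> hs; rewrite hcard in hs.
move=> hs hf; inversion hf; subst.
have Hs' : size (stds st') = #|stF st'| by rewrite hds' E /=; move: hs; rewrite hcard => [[]].
have Hf' : List.Forall (fun x => delta <= x) (stds st') by rewrite hds' E.
have [K1 [K2 [K3 [K4 [K5 K6]]]]] := IH hhat' Hs' Hf'.
do 4 (split => //); split.
  right; case: K5 => [->|h5]; rewrite hcard //; exact: ltnW.
apply: Rle_trans K6 _.
have hq1 : Q (stbeta st') <= Qdrop Q (stbeta st) j.
  case: hhat' => _ Hm; apply: Hm => k hk; rewrite hF' in hk.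
  case: Hh => Hb _; exact: (drop_supp Hb hk).
have hq2 := hjmin i iF.
rewrite E /= in hi.
rewrite /Phi hds' E /=; lra.
Qed.

Definition Inv d (Q : vec d -> R) delta kb s (st : state d) : Prop :=
  is_hat Q (stF st) (stbeta st) /\ size (stds st) = #|stF st| /\
  List.Forall (fun x => delta <= x) (stds st) /\
  (stF st = set0 \/ forall i, i \in stF st -> Qdrop Q (stbeta st) i - Q (stbeta st) >= head 0 (stds st) / 2) /\
  (#|stF st| + kb < s)%N.

Lemma step d (Q : vec d -> R) grad bb
  (Hbar : forall b : vec d, (l0 b <= l0 bb)%N -> Q bb <= Q b)
  s (Hs : (0 < s)%N) rms rps rm1 rp1
  (HRs : RSC Q grad s rms rps) (HR1 : RSC Q grad 1 rm1 rp1)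
  (Hsk : INR s - INR (l0 bb) >
         (INR (l0 bb) + 1) * ((sqrt (rps / rms) + 1) * (2 * rp1 / rms)) ^ 2)
  delta (Hdelta0 : delta > 0)
  (Hdelta : delta > 4 * rp1 / rms ^ 2 * (infnorm (grad bb)) ^ 2)
  (st st'' : state d) :
  Inv Q delta (l0 bb) s st -> ~ stop_obj Q delta st -> iter_obj Q st st'' ->
  Inv Q delta (l0 bb) s st'' /\ Phi Q st'' <= Phi Q st - delta / 2.
Proof.
move=> [Hh [Hsz [Hf [Hl Hc]]]] Hns [st' [Hfwd Hbwd]].
have Hfwd0 := Hfwd.
case: Hfwd0 => [i [ai [hiF [hmin [hF' [hhat' hds']]]]]].
have hgain0 : delta <= Q (stbeta st) - Q (stbeta st').
  have h1 : delta <= Q (stbeta st) - Q (plus_coord (stbeta st) ai i).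
    apply: Rnot_lt_le => h; apply: Hns; right; exists i, ai; split => //.
  have h2 : Q (stbeta st') <= Q (plus_coord (stbeta st) ai i).
    case: hhat' => _ H; apply: H => j hj; rewrite hF' in hj.
    case: Hh => Hb _; exact: (pc_supp _ Hb hj).
  lra.
have Hsz' : size (stds st') = #|stF st'| by rewrite hds' hF' cardsU1 hiF /= Hsz.
have Hf' : List.Forall (fun x => delta <= x) (stds st') by rewrite hds'; constructor.
have [K1 [K2 [K3 [K4 [K5 K6]]]]] := bwd_lemma Hbwd hhat' Hsz' Hf'.
have hPhi : Phi Q st' = Phi Q st - (Q (stbeta st) - Q (stbeta st')) / 2.
  rewrite /Phi hds' /=; field.
split; last lra.
do 4 (split => //).
case: K5 => [E|hlt].
  subst st''.
  have Hl' : forall i0, i0 \in stF st' -> Qdrop Q (stbeta st') i0 - Q (stbeta st') >= head 0 (stds st') / 2.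
    case: K4 => // E; have : i \in stF st' by rewrite hF' setU11.
    by rewrite E inE.
  have Hl0 : forall i0, i0 \in stF st -> Qdrop Q (stbeta st) i0 - Q (stbeta st) >= head 0 (stds st) / 2.
    case: Hl => // E j; by rewrite E inE.
  exact: (key Hbar Hs HRs HR1 Hsk Hdelta0 Hdelta Hh Hsz Hf Hl0 Hc Hns Hfwd Hl').
move: hlt Hc; rewrite hF' cardsU1 hiF /=; lia.
Qed.

Lemma least_nat (P : nat -> Prop) n : P n -> exists m, P m /\ forall k, (k < m)%N -> ~ P k.
Proof.
elim: n {-2}n (leqnn n) => [|n IH] m hm Pm.
  exists m; split => // k hk; move: hm hk; lia.
case: (classic (exists k, (k < m)%N /\ P k)) => [[k [hk Pk]]|hn].
  apply: (IH k) => //; move: hm hk; lia.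
exists m; split => // k hk Pk; apply: hn; by exists k.
Qed.

Unset Implicit Arguments.
Set Strict Implicit.

Theorem theorem1 (d : nat) (Q : vec d -> R) (grad : vec d -> vec d)
  (HQconv : convex Q) (HQC1 : is_C1_with_grad Q grad)
  (Hhat : forall F : {set 'I_d}, exists b : vec d, is_hat Q F b)
  (betabar : vec d)
  (Hbar : forall b : vec d, (l0 b <= l0 betabar)%N -> Q betabar <= Q b)
  (s : nat) (Hs : (0 < s)%N)
  (rms rps rm1 rp1 : R)
  (HRs : RSC Q grad s rms rps) (HR1 : RSC Q grad 1 rm1 rp1)
  (Hsk : INR s - INR (l0 betabar) >
         (INR (l0 betabar) + 1) *
         ((sqrt (rps / rms) + 1) * (2 * rp1 / rms)) ^ 2)
  (delta : R) (Hdelta0 : delta > 0)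
  (Hdelta : delta > 4 * rp1 / rms ^ 2 * (infnorm (grad betabar)) ^ 2)
  (tr : nat -> state d) (Hrun : foba_obj_run Q delta tr) :
  exists t : nat,
    stop_obj Q delta (tr t) /\
    (forall t' : nat, (t' < t)%N -> ~ stop_obj Q delta (tr t')) /\
    (#|stF (tr t)| <= s - l0 betabar)%N.
Proof.
case: Hrun => H0 Hstep.
have Hinv0 : Inv Q delta (l0 betabar) s (tr 0%N).
  rewrite H0 /init_state /Inv /=; split.
    split => // b' hb'; have -> : b' = @vzero d.
      by apply: functional_extensionality => j; apply: hb'; rewrite inE.
    lra.
  split; first by rewrite cards0.
  split; first by constructor.
  split; first by left.
  rewrite cards0 add0n; apply/ltP; apply: INR_lt.
  have : 0 <= (INR (l0 betabar) + 1) * ((sqrt (rps / rms) + 1) * (2 * rp1 / rms)) ^ 2.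
    apply: Rmult_le_pos; [have := pos_INR (l0 betabar); lra | apply: pow2_ge_0].
  lra.
have Hall : forall t, (forall t', (t' < t)%N -> ~ stop_obj Q delta (tr t')) ->
    Inv Q delta (l0 betabar) s (tr t) /\ Phi Q (tr t) <= Phi Q (tr 0%N) - INR t * (delta / 2).
  elim => [|t IH] Hns.
    split => //; rewrite /=; lra.
  have [I1 P1] := IH (fun t' ht' => Hns t' (ltnW (leq_trans ht' (leqnn t.+1)))).
  have ns : ~ stop_obj Q delta (tr t) by apply: Hns.
  have [I2 P2] := step Hbar Hs HRs HR1 Hsk Hdelta0 Hdelta I1 ns (Hstep t ns).
  split => //; rewrite S_INR; lra.
have [bmin hbmin] := Hhat setT.
have Hlow : forall st, Inv Q delta (l0 betabar) s st -> Q bmin <= Phi Q st.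
  move=> st [_ [_ [Hf _]]]; have := sumR_ge0 Hdelta0 Hf.
  have : Q bmin <= Q (stbeta st) by case: hbmin => _ H; apply: H => j; rewrite inE.
  rewrite /Phi; lra.
have Hex : exists t, stop_obj Q delta (tr t).
  apply: NNPP => hn.
  have Hns : forall t, ~ stop_obj Q delta (tr t) by move=> t ht; apply: hn; exists t.
  have hd2 : delta / 2 > 0 by lra.
  have [n hn'] := INR_archimed (delta / 2) (Phi Q (tr 0%N) - Q bmin) hd2.
  have [I P] := Hall n (fun t' _ => Hns t').
  have := Hlow _ I; lra.
case: Hex => t0 Ht0.
have [t [Ht Hmin]] := @least_nat (fun t => stop_obj Q delta (tr t)) t0 Ht0.
exists t; split => //; split => //.
have [[_ [_ [_ [_ Hc]]]] _] := Hall t Hmin.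
move: Hc; lia.
Qed.
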